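(* Let $n\geqslant1$, $a,b>0$, $\sigma\in(0,1)\cup(1,+\infty)$, and let $\widehat v(t,\xi)=\frac{\lambda_+e^{\lambda_-t}-\lambda_-e^{\lambda_+t}}{\lambda_+-\lambda_-}\widehat v_0+\frac{e^{\lambda_+t}-e^{\lambda_-t}}{\lambda_+-\lambda_-}\widehat v_1$ with $\lambda_\pm=\frac12\big(-1\pm\sqrt{1-4(a|\xi|^2+b|\xi|^{2\sigma})}\big)$ (the Fourier transform of the solution of $v_{tt}-a\Delta v+b(-\Delta)^\sigma v+v_t=0$, $v(0)=v_0$, $v_t(0)=v_1$). There exist $N_0>0$ sufficiently large and constants $c,C>0$ such that for all $t\geqslant0$ and all $|\xi|\geqslant N_0$: if $\sigma\in(0,1)$ then $|\widehat v|\leqslant Ce^{-ct}(|\widehat v_0|+|\xi|^{-1}|\widehat v_1|)$; if $\sigma\in(1,+\infty)$ then $|\widehat v|\leqslant Ce^{-ct}(|\widehat v_0|+|\xi|^{-\sigma}|\widehat v_1|)$.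
   Context: $(-\Delta)^\sigma$ is the Fourier multiplier with symbol $|\xi|^{2\sigma}$. *)

(* Defs.v *)
From HB Require Import structures.
From mathcomp Require Import all_boot all_order all_algebra.
From mathcomp Require Import all_classical all_reals all_analysis.
From mathcomp Require Export complex.
Set Implicit Arguments. Unset Strict Implicit. Unset Printing Implicit Defensive.
Import Order.TTheory GRing.Theory Num.Theory ComplexField.
Local Open Scope ring_scope.
Local Open Scope complex_scope.

Definition eucl_norm (R : realType) (n : nat) (xi : 'rV[R]_n) : R :=
  Num.sqrt (\sum_(i < n) xi ord0 i ^+ 2).

Definition cexp (R : realType) (z : R[i]) : R[i] :=
  (expR (complex.Re z))%:C * (cos (complex.Im z) +i* sin (complex.Im z)).

Definition cmod (R : realType) (z : R[i]) : R := Normc.normc z.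

(* Symbol of  -a Delta + b (-Delta)^sigma :  a|xi|^2 + b|xi|^(2 sigma). *)
Definition symb (R : realType) (n : nat) (a b sigma : R) (xi : 'rV[R]_n) : R :=
  a * eucl_norm xi ^+ 2 + b * (eucl_norm xi `^ (2 * sigma)).

Definition lam_plus (R : realType) (n : nat) (a b sigma : R) (xi : 'rV[R]_n) : R[i] :=
  (- 1 + sqrtC ((1 - 4 * symb a b sigma xi)%:C)) / 2.
Definition lam_minus (R : realType) (n : nat) (a b sigma : R) (xi : 'rV[R]_n) : R[i] :=
  (- 1 - sqrtC ((1 - 4 * symb a b sigma xi)%:C)) / 2.

(* hat v (t, xi) given hat v0 (xi) = v0 and hat v1 (xi) = v1. *)
Definition vhat (R : realType) (n : nat) (a b sigma : R) (xi : 'rV[R]_n)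
    (v0 v1 : R[i]) (t : R) : R[i] :=
  let lp := lam_plus a b sigma xi in
  let lm := lam_minus a b sigma xi in
  (lp * cexp (lm * t%:C) - lm * cexp (lp * t%:C)) / (lp - lm) * v0
  + (cexp (lp * t%:C) - cexp (lm * t%:C)) / (lp - lm) * v1.

(* Main.v *)
Require Import Defs.
From HB Require Import structures.
From mathcomp Require Import all_boot all_order all_algebra.
From mathcomp Require Import all_classical all_reals all_analysis.
From mathcomp Require Import complex.
From mathcomp Require Import ring lra.
Import Order.TTheory GRing.Theory Num.Theory ComplexField.
Local Open Scope ring_scope.

Section Helpers.
Local Open Scope complex_scope.
Variable R : realType.

Lemma two_C : (2 : R[i]) = (2:R)%:C.
Proof. by rewrite rmorph_nat. Qed.
Lemma two_neq0 : (2 : R[i]) != 0.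
Proof. by rewrite pnatr_eq0. Qed.
Lemma halfC (z : R[i]) : z / 2 = z * (2^-1 : R)%:C.
Proof. by rewrite two_C fmorphV. Qed.
Lemma lp_form (m : R) : (-1 + (0 +i* m)) / 2 = (- (2^-1)) +i* (m / 2) :> R[i].
Proof. rewrite halfC /=. apply/eqP; rewrite eq_complex /=. apply/andP; split; apply/eqP; ring. Qed.
Lemma lm_form (m : R) : (-1 - (0 +i* m)) / 2 = (- (2^-1)) +i* (- (m / 2)) :> R[i].
Proof. rewrite halfC /=. apply/eqP; rewrite eq_complex /=. apply/andP; split; apply/eqP; ring. Qed.
Lemma mulCt (x y t : R) : (x +i* y) * t%:C = (x * t) +i* (y * t).
Proof. apply/eqP; rewrite eq_complex /=. apply/andP; split; apply/eqP; ring. Qed.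
Lemma cexpE (x y : R) : cexp (x +i* y) = (expR x * cos y) +i* (expR x * sin y).
Proof. rewrite /cexp /=. apply/eqP; rewrite eq_complex /=. apply/andP; split; apply/eqP; ring. Qed.
Lemma normcR (x : R) : cmod x%:C = `|x|.
Proof. by rewrite /cmod /= expr0n /= addr0 sqrtr_sqr. Qed.
Lemma divE (X D A : R[i]) : D != 0 -> X = A * D -> X / D = A.
Proof. by move=> HD ->; rewrite mulfK. Qed.

Lemma vhat_eq (a b sigma : R) n (xi : 'rV[R]_n) v0 v1 (t m : R) :
  sqrtC ((1 - 4 * symb a b sigma xi)%:C) = 0 +i* m -> m != 0 ->
  vhat a b sigma xi v0 v1 t =
   (expR (- (2^-1) * t) * (cos (m / 2 * t) + sin (m / 2 * t) / m))%:C * v0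
   + (2 * expR (- (2^-1) * t) * sin (m / 2 * t) / m)%:C * v1.
Proof.
move=> Hq Hm; rewrite /vhat /lam_plus /lam_minus Hq lp_form lm_form !mulCt !cexpE.
congr (_ * v0 + _ * v1); apply: divE.
- apply/negP; rewrite eq_complex /= => /andP [_ /eqP H].
  by move/eqP: Hm; apply; lra.
- apply/eqP; rewrite eq_complex /= !mulNr cosN sinN; apply/andP; split; apply/eqP; field.
  all: try exact: Hm.
- apply/negP; rewrite eq_complex /= => /andP [_ /eqP H].
  by move/eqP: Hm; apply; lra.
- apply/eqP; rewrite eq_complex /= !mulNr cosN sinN; apply/andP; split; apply/eqP; field.
  all: try exact: Hm.
Qed.

Lemma fin (E c s w m rho r K x0 x1 v : R) :
 0 < E -> -1 <= c <= 1 -> -1 <= s <= 1 -> m * w = 1 -> 1 <= m * m -> 0 < rho ->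
 rho * r = 1 -> 0 <= r -> 0 <= K -> 4 * (r * r) <= K * K * (m * m) -> 0 <= x0 -> 0 <= x1 ->
 v <= `|E * (c + s * w)| * x0 + `|2 * E * s * w| * x1 -> v <= (2 + K) * E * (x0 + rho * x1).
Proof.
move=> E0 /andP[c1 c2] /andP[s1 s2] mw m1 rho0 rr r0 K0 Kr x00 x10 hv.
have ww : w * w <= 1.
  have -> : 1 = (m * w) * (m * w) by rewrite mw mulr1.
  have -> : m * w * (m * w) = (w * w) * (m * m) by ring.
  have := sqr_ge0 w; rewrite expr2 => ?; nra.
have w1 : -1 <= w <= 1.
  apply/andP; split; rewrite leNgt; apply/negP => H.
    have : 0 < (-1 - w) * (-1 - w) by apply: mulr_gt0; lra.
    nra.
  have : 0 < (w - 1) * (w - 1) by apply: mulr_gt0; lra.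
  nra.
have hA : `|E * (c + s * w)| <= 2 * E.
  have s3 : `|s| <= 1 by rewrite ler_norml s1 s2.
  have c3 : `|c| <= 1 by rewrite ler_norml c1 c2.
  have w3 : `|w| <= 1 by rewrite ler_norml.
  have sw : `|s * w| <= 1.
    by rewrite normrM -[1](mulr1 1); apply: ler_pM.
  have : `|c + s * w| <= 2 by apply: le_trans (ler_normD _ _) _; lra.
  move=> h; rewrite normrM (gtr0_norm E0) mulrC; apply: ler_wpM2r; lra.
have am0 : 0 <= `|m| by [].
have amw : `|m| * `|w| = 1 by rewrite -normrM mw normr1.
have am2 : `|m| * `|m| = m * m by rewrite -normrM ger0_norm // -expr2 sqr_ge0.
have rK : 2 * r <= K * `|m|.
  rewrite -(@ler_pXn2r _ 2%N) // ?nnegrE ?mulr_ge0 // !expr2.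
  have -> : K * `|m| * (K * `|m|) = K * K * (`|m| * `|m|) by ring.
  rewrite am2; lra.
have aw0 : 0 <= `|w| by [].
have hw : 2 * `|w| <= K * rho.
  have := ler_wpM2r (mulr_ge0 aw0 (ltW rho0)) rK.
  have -> : 2 * r * (`|w| * rho) = 2 * `|w| * (rho * r) by ring.
  have -> : K * `|m| * (`|w| * rho) = K * rho * (`|m| * `|w|) by ring.
  by rewrite rr amw !mulr1.
have hB : `|2 * E * s * w| <= K * E * rho.
  rewrite !normrM (gtr0_norm E0) ger0_norm //.
  have s3 : `|s| <= 1 by rewrite ler_norml s1 s2.
  have h1 : 2 * E * `|s| * `|w| <= 2 * E * 1 * `|w|.
    by apply: ler_wpM2r => //; apply: ler_wpM2l => //; lra.
  apply: le_trans h1 _.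
  have -> : 2 * E * 1 * `|w| = E * (2 * `|w|) by ring.
  have -> : K * E * rho = E * (K * rho) by ring.
  by apply: ler_wpM2l => //; lra.
apply: (le_trans hv). 
apply: le_trans (lerD (ler_wpM2r x00 hA) (ler_wpM2r x10 hB)) _.
have E0' : 0 <= E by lra.
have := mulr_ge0 (mulr_ge0 K0 E0') x00.
have := mulr_ge0 (mulr_ge0 E0' (ltW rho0)) x10.
move=> h1 h2.
have -> : (2 + K) * E * (x0 + rho * x1) = 2 * E * x0 + K * E * rho * x1 + (K * E * x0) + 2 * (E * rho * x1) by ring.
lra.
Qed.

Lemma Kbound (K a m r : R) : 0 < a -> 1 <= K -> 2 <= K * a ->
  2 * (a * (r * r)) <= m * m -> 4 * (r * r) <= K * K * (m * m).
Proof.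
move=> a0 K1 Ka h.
have KK0 : 0 <= K * K by apply: mulr_ge0; lra.
have h1 := ler_wpM2l KK0 h.
apply: le_trans h1.
have KKa : 2 <= K * K * a.
  have : K * a <= K * (K * a) by rewrite ler_pMl; lra.
  rewrite mulrA; lra.
have rr : 0 <= r * r by rewrite -expr2 sqr_ge0.
have := ler_wpM2r rr KKa.
have -> : K * K * (2 * (a * (r * r))) = 2 * (K * K * a * (r * r)) by ring.
lra.
Qed.
Lemma sqrt_neg (x : R) : x < 0 -> exists m : R, sqrtC (x%:C) = 0 +i* m /\ m * m = - x.
Proof.
move=> hx; have := sqrtCK (x%:C); case: (sqrtC x%:C) => p q.
rewrite expr2 => /eqP; rewrite eq_complex /= => /andP [/eqP h1 /eqP h2].
have pq : p * q = 0 by lra.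
have p0 : p = 0.
  move/eqP: pq; rewrite mulf_eq0 => /orP [/eqP //| /eqP q0].
  exfalso; move: h1; rewrite q0 mulr0 subr0 => h1.
  have := sqr_ge0 p; rewrite expr2; lra.
exists q; split; first by rewrite p0.
move: h1; rewrite p0 mulr0; lra.
Qed.

Lemma normcR' (x : R) : Normc.normc x%:C = `|x|.
Proof. exact: normcR. Qed.
End Helpers.

Theorem proposition3p2 (R : realType) (n : nat) (a b sigma : R) :
  (1 <= n)%N -> 0 < a -> 0 < b -> 0 < sigma -> sigma != 1 ->
  exists N0 c C : R, [/\ 0 < N0, 0 < c, 0 < C &
    forall (t : R) (xi : 'rV[R]_n) (v0 v1 : R[i]),
      0 <= t -> N0 <= eucl_norm xi ->
      (sigma < 1 ->
         cmod (vhat a b sigma xi v0 v1 t)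
         <= C * expR (- (c * t)) * (cmod v0 + (eucl_norm xi)^-1 * cmod v1))
      /\
      (1 < sigma ->
         cmod (vhat a b sigma xi v0 v1 t)
         <= C * expR (- (c * t)) * (cmod v0 + eucl_norm xi `^ (- sigma) * cmod v1))].
Proof.
move=> _ a0 b0 s0 s1.
have ia0 : 0 < a^-1 by rewrite invr_gt0.
have ib0 : 0 < b^-1 by rewrite invr_gt0.
have aia : a * a^-1 = 1 by rewrite mulfV // gt_eqF.
have bib : b * b^-1 = 1 by rewrite mulfV // gt_eqF.
pose K := 1 + 2 * a^-1 + 2 * b^-1.
have K1 : 1 <= K by rewrite /K; lra.
have Ka : 2 <= K * a.
  have -> : K * a = a + 2 * (a * a^-1) + 2 * (a * b^-1) by rewrite /K; ring.
  have := mulr_gt0 a0 ib0; lra.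
have Kb : 2 <= K * b.
  have -> : K * b = b + 2 * (b * a^-1) + 2 * (b * b^-1) by rewrite /K; ring.
  have := mulr_gt0 b0 ia0; lra.
exists (1 + a^-1), (2^-1), (2 + K); split.
- lra.
- by rewrite invr_gt0.
- lra.
move=> t xi v0 v1 t0 Hr.
have r0 : 0 <= eucl_norm xi by rewrite /eucl_norm sqrtr_ge0.
set r := eucl_norm xi in Hr r0 *.
have r1 : 1 <= r by lra.
have ar : 2 <= a * (r * r).
  have h : (1 + a^-1) * (1 + a^-1) <= r * r by apply: ler_pM; lra.
  have h2 := ler_wpM2l (ltW a0) h.
  have e : a * ((1 + a^-1) * (1 + a^-1)) = a + 2 * (a * a^-1) + (a * a^-1) * a^-1 by ring.
  move: h2; rewrite e aia; lra.
have bS : 0 <= b * r `^ (2 * sigma) by rewrite mulr_ge0 ?powR_ge0 // ltW.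
have HS : symb a b sigma xi = a * (r * r) + b * r `^ (2 * sigma) by rewrite /symb expr2.
have [m [Hq Hm]] := @sqrt_neg R (1 - 4 * symb a b sigma xi) (ltac:(rewrite HS; lra)).
have m0 : m != 0 by apply/eqP => m0; move: Hm; rewrite m0 mulr0 HS; lra.
have m1 : 1 <= m * m by rewrite Hm HS; lra.
have mw : m * m^-1 = 1 by rewrite mulfV.
rewrite (@vhat_eq R a b sigma n xi v0 v1 t m Hq m0).
set E := expR (- 2^-1 * t).
have E0 : 0 < E by rewrite /E expR_gt0.
have -> : expR (- (2^-1 * t)) = E by rewrite /E mulNr.
set c := cos (m / 2 * t); set s := sin (m / 2 * t).
have hc : -1 <= c <= 1 by rewrite cos_geN1 cos_le1.
have hs : -1 <= s <= 1 by rewrite sin_geN1 sin_le1.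
have x00 : 0 <= cmod v0 by rewrite /cmod /Normc.normc; case: v0 => ? ?; rewrite sqrtr_ge0.
have x10 : 0 <= cmod v1 by rewrite /cmod /Normc.normc; case: v1 => ? ?; rewrite sqrtr_ge0.
have hv : cmod (((E * (c + s / m))%:C)%C * v0 + ((2 * E * s / m)%:C)%C * v1)
   <= `|E * (c + s * m^-1)| * cmod v0 + `|2 * E * s * m^-1| * cmod v1.
  rewrite /cmod; apply: le_trans (le_normcD _ _) _.
  by rewrite !Normc.normcM !normcR'.
have rpos : 0 < r by lra.
have K0 : 0 <= K by lra.
split => hsig.
- have rho0 : 0 < r^-1 by rewrite invr_gt0.
  have rr : r^-1 * r = 1 by rewrite mulVf // gt_eqF.
  have Kr : 4 * (r * r) <= K * K * (m * m).
    apply: Kbound a0 K1 Ka _.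
    rewrite Hm HS; lra.
  exact: (@fin R E c s (m^-1) m (r^-1) r K _ _ _ E0 hc hs mw m1 rho0 rr r0 K0 Kr x00 x10 hv).
- have P0 : 0 < r `^ sigma by rewrite powR_gt0.
  have HP : r `^ (2 * sigma) = r `^ sigma * r `^ sigma.
    by rewrite mulrC powRrM powR_mulrn ?powR_ge0 // expr2.
  rewrite powRN.
  have rho0 : 0 < (r `^ sigma)^-1 by rewrite invr_gt0.
  have rr : (r `^ sigma)^-1 * r `^ sigma = 1 by rewrite mulVf // gt_eqF.
  have Kr : 4 * (r `^ sigma * r `^ sigma) <= K * K * (m * m).
    apply: Kbound b0 K1 Kb _.
    move: bS; rewrite Hm HS HP => bS; lra.
  exact: (@fin R E c s (m^-1) m _ _ K _ _ _ E0 hc hs mw m1 rho0 rr (ltW P0) K0 Kr x00 x10 hv).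
Qed.
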